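(* For every integer $n\ge1$, $$\frac{\sqrt{12}\,e^{\mu(n)}}{24n-1}\left(1-\frac{1}{\mu(n)}\right)=\frac{e^{\pi\sqrt{2n/3}}}{4n\sqrt3}\sum_{t=0}^\infty \frac{g(t)}{n^{t/2}},$$ where $\mu(n)=\frac{\pi}{6}\sqrt{24n-1}$ and $$g(t)=\frac{1}{(-4\sqrt6)^t}\sum_{k=0}^{\lfloor (t+1)/2\rfloor}\binom{t+1}{k}\frac{t+1-k}{(t+1-2k)!}\left(\frac{\pi}{6}\right)^{t-2k}.$$ *)

(* Defs.v *)
From Stdlib Require Import Reals ZArith Arith.
From Coquelicot Require Import Coquelicot.
Open Scope R_scope.

Definition mu (n : nat) : R := PI / 6 * sqrt (24 * INR n - 1).

(* g(t) = (-4 sqrt 6)^(-t) * sum_{k=0}^{floor((t+1)/2)} C(t+1,k) (t+1-k)/(t+1-2k)! (pi/6)^(t-2k).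
   The exponent t-2k may equal -1 (t odd, k=(t+1)/2), hence an integer power. *)
Definition g (t : nat) : R :=
  / ((- (4 * sqrt 6)) ^ t) *
  sum_f_R0 (fun k : nat =>
      Binomial.C (t + 1) k * INR (t + 1 - k) / INR (fact (t + 1 - 2 * k))
      * powerRZ (PI / 6) (Z.of_nat t - 2 * Z.of_nat k)%Z)
    ((t + 1) / 2)%nat.

Definition g_term (n t : nat) : R := g t / (sqrt (INR n)) ^ t.

(* Main.v *)
Require Import Defs.
From Stdlib Require Import Reals ZArith Arith Lra Lia FunctionalExtensionality.
From Coquelicot Require Import Coquelicot.
Open Scope R_scope.

Lemma C_nonneg n k : 0 <= Binomial.C n k.
Proof.
  unfold Binomial.C. apply Rle_mult_inv_pos. apply pos_INR.
  apply Rmult_lt_0_compat; apply INR_fact_lt_0.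
Qed.

Lemma term_le_sum (f : nat -> R) N i : (forall i, 0 <= f i) -> (i <= N)%nat -> f i <= sum_f_R0 f N.
Proof.
  intros Hf. induction N; intros Hi.
  - replace i with 0%nat by lia. simpl; lra.
  - simpl. destruct (Nat.eq_dec i (S N)) as [->|Hne].
    + assert (0 <= sum_f_R0 f N). { clear -Hf. induction N; simpl; auto. specialize (Hf (S N)). lra. }
      lra.
    + specialize (IHN ltac:(lia)). specialize (Hf (S N)). lra.
Qed.

Lemma C_le_2pow n k : (k <= n)%nat -> Binomial.C n k <= 2 ^ n.
Proof.
  intros Hk. replace 2 with (1+1) by lra. rewrite binomial.
  pose proof (term_le_sum (fun i => Binomial.C n i * 1 ^ i * 1 ^ (n - i)) n k) as H.
  simpl in H. rewrite !pow1, !Rmult_1_r in H. apply H; auto.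
  intros i. rewrite !pow1, !Rmult_1_r. apply C_nonneg.
Qed.

Lemma INR_le_2pow m : INR m <= 2 ^ m.
Proof.
  induction m. simpl; lra. rewrite S_INR. simpl.
  assert (1 <= 2 ^ m) by (apply pow_R1_Rle; lra). lra.
Qed.

Definition ilv (h : nat -> R) (i : nat) : R := if Nat.even i then h (Nat.div2 i) else 0.

Lemma ilv_sum h k : sum_f_R0 (ilv h) (2*k) = sum_f_R0 h k /\ sum_f_R0 (ilv h) (S (2*k)) = sum_f_R0 h k.
Proof.
  induction k as [|k [IH1 IH2]].
  - simpl. unfold ilv; simpl. lra.
  - replace (2 * S k)%nat with (S (S (2*k))) by lia.
    assert (E1 : ilv h (S (S (2*k))) = h (S k)).
    { assert (Hd: Nat.div2 (2*k) = k) by (rewrite Nat.div2_div, Nat.mul_comm, Nat.div_mul; lia).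
      unfold ilv. replace (Nat.even (S (S (2*k)))) with true by (rewrite Nat.even_succ_succ, Nat.even_mul; reflexivity).
      change (Nat.div2 (S (S (2*k)))) with (S (Nat.div2 (2*k))). rewrite Hd. reflexivity. }
    assert (E2 : ilv h (S (S (S (2*k)))) = 0).
    { unfold ilv. rewrite Nat.even_succ_succ, Nat.even_succ, Nat.odd_mul. simpl. reflexivity. }
    split.
    + change (sum_f_R0 (ilv h) (S (2*k)) + ilv h (S (S (2*k))) = sum_f_R0 h k + h (S k)).
      rewrite IH2, E1. reflexivity.
    + change (sum_f_R0 (ilv h) (S (2*k)) + ilv h (S (S (2*k))) + ilv h (S (S (S (2*k)))) = sum_f_R0 h k + h (S k)).
      rewrite IH2, E1, E2. lra.
Qed.

Lemma is_series_ilv h l : is_series h l -> is_series (ilv h) l.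
Proof.
  rewrite !is_series_Reals. intros H eps Heps.
  destruct (H eps Heps) as [N HN]. exists (2*N)%nat. intros n Hn.
  destruct (Nat.Even_or_Odd n) as [[k ->]|[k ->]].
  - rewrite (proj1 (ilv_sum h k)). apply HN. lia.
  - replace (2*k+1)%nat with (S (2*k)) by lia. rewrite (proj2 (ilv_sum h k)). apply HN. lia.
Qed.

Lemma reidx_aux (m : nat) : forall f : nat -> nat -> R,
  (sum_f_R0 (fun k => f (m - 2*k)%nat k) (Nat.div2 m) = sum_f_R0 (fun j => ilv (f j) (m - j)) m) /\
  (sum_f_R0 (fun k => f (S m - 2*k)%nat k) (Nat.div2 (S m)) = sum_f_R0 (fun j => ilv (f j) (S m - j)) (S m)).
Proof.
  induction m as [|m IH]; intros f.
  - split; simpl; unfold ilv; simpl; lra.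
  - split; [apply (IH f)|].
    destruct (IH (fun j k => f j (S k))) as [IH1 _].
    change (Nat.div2 (S (S m))) with (S (Nat.div2 m)).
    rewrite decomp_sum by apply Nat.lt_0_succ. simpl Nat.pred.
    replace (fun i => f (S (S m) - 2 * S i)%nat (S i)) with (fun k => f (m - 2*k)%nat (S k)).
    2:{ apply functional_extensionality. intros i. f_equal. lia. }
    rewrite IH1.
    change (sum_f_R0 (fun j => ilv (f j) (S (S m) - j)) (S (S m))) with
      (sum_f_R0 (fun j => ilv (f j) (S (S m) - j)) m + ilv (f (S m)) (S (S m) - S m) + ilv (f (S (S m))) (S (S m) - S (S m))).
    replace (S (S m) - S m)%nat with 1%nat by lia. rewrite Nat.sub_diag.
    unfold ilv at 2 3. simpl.
    rewrite (sum_eq (fun j => ilv (f j) (S (S m) - j)) (fun j => ilv (fun k => f j (S k)) (m - j))).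
    + unfold ilv; simpl; lra.
    + intros j Hj. replace (S (S m) - j)%nat with (S (S (m - j))) by lia.
      unfold ilv. rewrite Nat.even_succ_succ. reflexivity.
Qed.

Lemma reidx f m : sum_f_R0 (fun k => f (m - 2*k)%nat k) (Nat.div2 m) = sum_f_R0 (fun j => ilv (f j) (m - j)) m.
Proof. apply (reidx_aux m f). Qed.

Lemma tri (E : nat -> nat -> R) M :
  sum_f_R0 (fun m => sum_f_R0 (fun j => E j (m - j)%nat) m) M = sum_f_R0 (fun j => sum_f_R0 (E j) (M - j)) M.
Proof.
  induction M.
  - simpl. reflexivity.
  - change (sum_f_R0 (fun m => sum_f_R0 (fun j => E j (m - j)%nat) m) M + sum_f_R0 (fun j => E j (S M - j)%nat) (S M)
      = sum_f_R0 (fun j => sum_f_R0 (E j) (S M - j)) M + sum_f_R0 (E (S M)) (S M - S M)).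
    rewrite IHM. rewrite Nat.sub_diag.
    rewrite (sum_eq (fun j => sum_f_R0 (E j) (S M - j)) (fun j => sum_f_R0 (E j) (M - j) + E j (S M - j)%nat)).
    + rewrite plus_sum. simpl (sum_f_R0 (fun j => E j (S M - j)%nat) (S M)). rewrite Nat.sub_diag. simpl. lra.
    + intros j Hj. replace (S M - j)%nat with (S (M - j)) by lia. reflexivity.
Qed.



Lemma geo_is A q : 0 <= q < 1 -> is_series (fun k => A * q ^ k) (A / (1 - q)).
Proof.
  intros Hq. apply (is_series_ext (fun k => q ^ k * A)). { intros; simpl; ring. }
  replace (A / (1 - q)) with (/ (1 - q) * A) by (field; lra).
  apply is_series_scal_r. apply is_series_geom. rewrite Rabs_pos_eq; lra.
Qed.

Lemma geo_ex A q : 0 <= q < 1 -> ex_series (fun k => A * q ^ k).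
Proof. intros Hq. eexists. apply geo_is; auto. Qed.

Lemma geo_S A q : 0 <= q < 1 -> Series (fun k => A * q ^ k) = A / (1 - q).
Proof. intros Hq. apply is_series_unique. apply geo_is; auto. Qed.

Lemma series_bound (a : nat -> R) A q : 0 <= q < 1 -> (forall k, Rabs (a k) <= A * q ^ k) ->
  ex_series a /\ Rabs (Series a) <= A / (1 - q).
Proof.
  intros Hq Ha.
  assert (Ea : ex_series (fun k => Rabs (a k))).
  { apply (@ex_series_le R_AbsRing R_CompleteNormedModule _ (fun k => A * q ^ k)). intros k. change (norm (Rabs (a k))) with (Rabs (Rabs (a k))).
    rewrite Rabs_Rabsolu. apply Ha. apply geo_ex; auto. }
  split. apply ex_series_Rabs; auto.
  eapply Rle_trans. apply Series_Rabs; auto.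
  rewrite <- geo_S by auto. apply Series_le. intros k; split. apply Rabs_pos. apply Ha. apply geo_ex; auto.
Qed.

Lemma diag_fubini (E : nat -> nat -> R) p q K :
  0 <= p -> 0 < q < 1 -> p <= q * q -> 0 <= K -> (forall j i, Rabs (E j i) <= K * p ^ j * q ^ i) ->
  is_series (fun m => sum_f_R0 (fun j => E j (m - j)%nat) m) (Series (fun j => Series (E j))).
Proof.
  intros Hp Hq Hpq HK HE.
  assert (Hp1 : p < 1) by nra.
  assert (Erow : forall j, ex_series (E j)).
  { intros j. apply (proj1 (series_bound (E j) (K * p ^ j) q ltac:(lra) (HE j))). }
  assert (Tail : forall j L, Rabs (Series (E j) - sum_f_R0 (E j) L) <= K * p ^ j * q ^ (S L) / (1 - q)).
  { intros j L. rewrite (Series_incr_n (E j) (S L)) by (auto; lia). simpl Nat.pred.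
    replace (sum_f_R0 (E j) L + Series (fun k => E j (S L + k)%nat) - sum_f_R0 (E j) L)
      with (Series (fun k => E j (S L + k)%nat)) by ring.
    apply (fun H => proj2 (series_bound _ (K * p ^ j * q ^ S L) q ltac:(lra) H)).
    intros k. eapply Rle_trans. apply HE. rewrite pow_add. lra. }
  set (B := fun j => Series (E j)).
  assert (HB : forall j, Rabs (B j) <= (K / (1 - q)) * p ^ j).
  { intros j. unfold B. replace (K / (1 - q) * p ^ j) with (K * p ^ j / (1 - q)) by (field; lra).
    apply (proj2 (series_bound (E j) (K * p ^ j) q ltac:(lra) (HE j))). }
  assert (EB : ex_series B) by (apply (proj1 (series_bound B (K / (1 - q)) p ltac:(lra) HB))).
  assert (TailB : forall M, Rabs (Series B - sum_f_R0 B M) <= K / (1 - q) * p ^ S M / (1 - p)).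
  { intros M. rewrite (Series_incr_n B (S M)) by (auto; lia). simpl Nat.pred.
    replace (sum_f_R0 B M + Series (fun k => B (S M + k)%nat) - sum_f_R0 B M)
      with (Series (fun k => B (S M + k)%nat)) by ring.
    apply (fun H => proj2 (series_bound _ (K / (1 - q) * p ^ S M) p ltac:(lra) H)).
    intros k. eapply Rle_trans. apply HB. rewrite pow_add. lra. }
  assert (Diff : forall M, Rabs (sum_f_R0 B M - sum_f_R0 (fun m => sum_f_R0 (fun j => E j (m - j)%nat) m) M)
                 <= K / ((1 - q) * (1 - q)) * q ^ S M).
  { intros M. rewrite tri, <- minus_sum.
    eapply Rle_trans. apply Rsum_abs.
    eapply Rle_trans. apply (sum_Rle _ (fun j => K / (1 - q) * q ^ S M * q ^ j)).
    - intros j Hj. unfold B. eapply Rle_trans. apply Tail.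
      assert (Hpj : p ^ j <= q ^ j * q ^ j) by (rewrite <- Rpow_mult_distr; apply pow_incr; lra).
      assert (Hsp : q ^ S M = q ^ j * q ^ S (M - j)) by (rewrite <- pow_add; f_equal; lia).
      assert (0 <= q ^ S (M - j)) by (apply pow_le; lra).
      assert (0 <= q ^ j) by (apply pow_le; lra).
      assert (Hm : p ^ j * q ^ S (M - j) <= q ^ S M * q ^ j) by (rewrite Hsp; nra).
      replace (K * p ^ j * q ^ S (M - j) / (1 - q)) with (K / (1 - q) * (p ^ j * q ^ S (M - j))) by (field; lra).
      rewrite Rmult_assoc. apply Rmult_le_compat_l; auto.
      unfold Rdiv. apply Rmult_le_pos; auto. left; apply Rinv_0_lt_compat; lra.
    - rewrite (sum_eq _ (fun j => q ^ j * (K / (1 - q) * q ^ S M))) by (intros; ring).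
      rewrite <- scal_sum, tech3 by lra.
      assert (0 <= q ^ S (S M)) by (apply pow_le; lra).
      assert (0 <= q ^ S M) by (apply pow_le; lra).
      assert (HA : 0 <= K / (1 - q) * q ^ S M).
      { apply Rmult_le_pos; auto. unfold Rdiv. apply Rmult_le_pos; auto. left; apply Rinv_0_lt_compat; lra. }
      replace (K / ((1 - q) * (1 - q)) * q ^ S M) with ((K / (1 - q) * q ^ S M) * (1 / (1 - q))) by (field; lra).
      apply Rmult_le_compat_l; auto.
      unfold Rdiv. apply Rmult_le_compat_r. { left; apply Rinv_0_lt_compat; lra. } lra. }
  set (K2 := K / (1 - q) / (1 - p) + K / ((1 - q) * (1 - q))).
  assert (HK2 : 0 <= K2).
  { unfold K2. assert (0 < / (1-q)) by (apply Rinv_0_lt_compat; lra).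
    assert (0 < / (1-p)) by (apply Rinv_0_lt_compat; lra).
    assert (0 < / ((1-q)*(1-q))) by (apply Rinv_0_lt_compat; nra).
    unfold Rdiv. apply Rplus_le_le_0_compat; repeat apply Rmult_le_pos; lra. }
  rewrite is_series_Reals. intros eps Heps.
  destruct (pow_lt_1_zero q ltac:(rewrite Rabs_pos_eq; lra) (eps / (K2 + 1))) as [N HN].
  { apply Rdiv_lt_0_compat; lra. }
  exists N. intros M HM. unfold Rdist.
  specialize (HN (S M) ltac:(lia)). rewrite Rabs_pos_eq in HN by (apply pow_le; lra).
  specialize (TailB M). specialize (Diff M).
  assert (HpqM : p ^ S M <= q ^ S M) by (apply pow_incr; nra).
  assert (Hb : Rabs (sum_f_R0 (fun m => sum_f_R0 (fun j => E j (m - j)%nat) m) M - Series B) <= K2 * q ^ S M).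
  { replace (sum_f_R0 (fun m => sum_f_R0 (fun j => E j (m - j)%nat) m) M - Series B) with
      (- (Series B - sum_f_R0 B M) - (sum_f_R0 B M - sum_f_R0 (fun m => sum_f_R0 (fun j => E j (m - j)%nat) m) M)) by ring.
    eapply Rle_trans. apply Rabs_triang. rewrite !Rabs_Ropp.
    unfold K2. rewrite Rmult_plus_distr_r.
    apply Rplus_le_compat; [|exact Diff].
    eapply Rle_trans. exact TailB.
    replace (K / (1 - q) * p ^ S M / (1 - p)) with (K / (1 - q) / (1 - p) * p ^ S M) by (field; lra).
    apply Rmult_le_compat_l; auto.
    unfold Rdiv. repeat apply Rmult_le_pos; auto; left; apply Rinv_0_lt_compat; lra. }
  eapply Rle_lt_trans. exact Hb.
  assert (K2 * q ^ S M <= K2 * (eps / (K2 + 1))) by (apply Rmult_le_compat_l; lra).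
  assert (K2 * (eps / (K2 + 1)) < eps).
  { unfold Rdiv. rewrite <- Rmult_assoc. apply (Rmult_lt_reg_r (K2 + 1)); [lra|].
    rewrite Rmult_assoc, Rinv_l by lra. nra. }
  lra.
Qed.






Definition Fs (x : R) (j k : nat) : R := Binomial.C (j + 2 * k) k * x ^ k.
Definition Gs (x : R) (j k : nat) : R := INR (j + k) * Binomial.C (j + 2 * k) k * x ^ k.
Definition F x j := Series (Fs x j).
Definition G x j := Series (Gs x j).

Lemma pow_4_8 j k x : 2 ^ (j + k) * 2 ^ (j + 2 * k) * x ^ k = 4 ^ j * (8 * x) ^ k.
Proof.
  rewrite !pow_add. replace (2 * k)%nat with (k + k)%nat by lia. rewrite pow_add.
  replace 4 with (2 * 2) by lra. replace (8 * x) with (2 * 2 * 2 * x) by lra.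
  rewrite !Rpow_mult_distr. ring.
Qed.

Lemma Fs_bound x j k : 0 <= x -> 0 <= Fs x j k <= 4 ^ j * (8 * x) ^ k.
Proof.
  intros Hx. unfold Fs. pose proof (C_nonneg (j + 2*k) k). pose proof (C_le_2pow (j + 2*k) k ltac:(lia)).
  assert (0 <= x ^ k) by (apply pow_le; lra).
  assert (1 <= 2 ^ (j + k)) by (apply pow_R1_Rle; lra).
  split. nra. rewrite <- pow_4_8.
  assert (Binomial.C (j + 2 * k) k * x ^ k <= 2 ^ (j + 2 * k) * x ^ k) by nra.
  assert (0 <= 2 ^ (j + 2 * k) * x ^ k) by nra. nra.
Qed.

Lemma Gs_bound x j k : 0 <= x -> 0 <= Gs x j k <= 4 ^ j * (8 * x) ^ k.
Proof.
  intros Hx. unfold Gs. pose proof (C_nonneg (j + 2*k) k). pose proof (C_le_2pow (j + 2*k) k ltac:(lia)).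
  assert (0 <= x ^ k) by (apply pow_le; lra).
  pose proof (INR_le_2pow (j + k)). pose proof (pos_INR (j + k)).
  rewrite <- pow_4_8.
  assert (0 <= Binomial.C (j + 2 * k) k * x ^ k) by nra.
  assert (Binomial.C (j + 2 * k) k * x ^ k <= 2 ^ (j + 2 * k) * x ^ k) by nra.
  split. rewrite Rmult_assoc. nra.
  rewrite !Rmult_assoc. apply Rmult_le_compat; auto. 
Qed.

Section Rec.
Variable x : R.
Hypothesis Hx : 0 <= x <= 1/96.

Lemma F_ex j : ex_series (Fs x j).
Proof.
  apply (fun H => proj1 (series_bound _ (4 ^ j) (8 * x) ltac:(lra) H)).
  intros k. destruct (Fs_bound x j k ltac:(lra)). rewrite Rabs_pos_eq; lra.
Qed.
Lemma G_ex j : ex_series (Gs x j).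
Proof.
  apply (fun H => proj1 (series_bound _ (4 ^ j) (8 * x) ltac:(lra) H)).
  intros k. destruct (Gs_bound x j k ltac:(lra)). rewrite Rabs_pos_eq; lra.
Qed.
Lemma F_bound j : Rabs (F x j) <= 2 * 4 ^ j.
Proof.
  eapply Rle_trans. apply (fun H => proj2 (series_bound _ (4 ^ j) (8 * x) ltac:(lra) H)).
  intros k. destruct (Fs_bound x j k ltac:(lra)). rewrite Rabs_pos_eq; lra.
  assert (0 < 4 ^ j) by (apply pow_lt; lra).
  apply (Rmult_le_reg_r (1 - 8 * x)); [lra|]. unfold Rdiv. rewrite Rmult_assoc, Rinv_l by lra. nra.
Qed.
Lemma G_bound j : Rabs (G x j) <= 2 * 4 ^ j.
Proof.
  eapply Rle_trans. apply (fun H => proj2 (series_bound _ (4 ^ j) (8 * x) ltac:(lra) H)).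
  intros k. destruct (Gs_bound x j k ltac:(lra)). rewrite Rabs_pos_eq; lra.
  assert (0 < 4 ^ j) by (apply pow_lt; lra).
  apply (Rmult_le_reg_r (1 - 8 * x)); [lra|]. unfold Rdiv. rewrite Rmult_assoc, Rinv_l by lra. nra.
Qed.

Lemma shift_ex (a : nat -> R) : ex_series a -> ex_series (fun k => a (S k)).
Proof. intros H. apply (proj1 (ex_series_incr_1 a)). exact H. Qed.

Lemma ex_mult_l (c : R) (a : nat -> R) : ex_series a -> ex_series (fun k => c * a k).
Proof.
  intros [l Hl]. exists (l * c). apply (is_series_ext (fun k => a k * c)). { intros; simpl; ring. }
  apply is_series_scal_r. exact Hl.
Qed.

Lemma pascal' N i : (i < N)%nat -> Binomial.C (S N) (S i) = Binomial.C N i + Binomial.C N (S i).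
Proof. intros H. rewrite pascal; auto. Qed.

Lemma Fs_0 n : Fs x n 0 = 1.
Proof. unfold Fs. rewrite Nat.mul_0_r, Nat.add_0_r, C_n_0. simpl; ring. Qed.

Lemma F_rec j : F x (S j) = F x j + x * F x (S (S j)).
Proof.
  unfold F. rewrite (Series_incr_1 (Fs x (S j))), (Series_incr_1 (Fs x j)) by apply F_ex.
  rewrite (Series_ext (fun k => Fs x (S j) (S k)) (fun k => Fs x j (S k) + x * Fs x (S (S j)) k)).
  2:{ intros k. unfold Fs. replace (S j + 2 * S k)%nat with (S (j + 2 * S k)) by lia.
      rewrite pascal' by lia. replace (j + 2 * S k)%nat with (S (S j) + 2 * k)%nat at 1 by lia.
      simpl pow. ring. }
  rewrite Series_plus by (try apply shift_ex; try apply ex_mult_l; apply F_ex).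
  rewrite Series_scal_l, !Fs_0. ring.
Qed.

Lemma Gs_0 n : Gs x n 0 = INR n.
Proof. unfold Gs. rewrite Nat.mul_0_r, !Nat.add_0_r, C_n_0. simpl; ring. Qed.

Lemma G_rec j : G x (S j) = G x j + F x j + x * G x (S (S j)).
Proof.
  unfold G, F. rewrite (Series_incr_1 (Gs x (S j))), (Series_incr_1 (Gs x j)) by apply G_ex.
  rewrite (Series_incr_1 (Fs x j)) by apply F_ex.
  rewrite (Series_ext (fun k => Gs x (S j) (S k)) (fun k => (Gs x j (S k) + Fs x j (S k)) + x * Gs x (S (S j)) k)).
  2:{ intros k. unfold Gs, Fs. replace (S j + 2 * S k)%nat with (S (j + 2 * S k)) by lia.
      rewrite pascal' by lia.
      assert (E : Binomial.C (j + 2 * S k) k = Binomial.C (S (S j) + 2 * k) k) by (f_equal; lia).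
      rewrite E. rewrite !plus_INR, !S_INR. simpl pow. ring. }
  rewrite Series_plus by (try apply ex_mult_l; try apply G_ex;
     apply (ex_series_plus (V := R_NormedModule)); apply shift_ex; try apply G_ex; apply F_ex).
  rewrite Series_plus by (apply shift_ex; try apply G_ex; apply F_ex).
  rewrite Series_scal_l, !Gs_0, !Fs_0. rewrite S_INR. ring.
Qed.

Lemma C_double k : Binomial.C (2 * S k) (S k) = 2 * Binomial.C (1 + 2 * k) k.
Proof.
  replace (2 * S k)%nat with (S (1 + 2 * k)) by lia. rewrite pascal' by lia.
  rewrite (pascal_step1 (1 + 2 * k) (S k)) by lia.
  replace (1 + 2 * k - S k)%nat with k by lia. ring.
Qed.

Lemma F_base : F x 0 = 1 + 2 * x * F x 1.
Proof.
  unfold F. rewrite (Series_incr_1 (Fs x 0)) by apply F_ex. rewrite Fs_0.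
  rewrite (Series_ext _ (fun k => (2 * x) * Fs x 1 k)). rewrite Series_scal_l. ring.
  intros k. unfold Fs. replace (0 + 2 * S k)%nat with (2 * S k)%nat by lia. rewrite C_double. simpl pow. ring.
Qed.

Lemma G_base : G x 0 = 2 * x * G x 1.
Proof.
  unfold G. rewrite (Series_incr_1 (Gs x 0)) by apply G_ex. rewrite Gs_0.
  rewrite (Series_ext _ (fun k => (2 * x) * Gs x 1 k)). rewrite Series_scal_l. simpl; ring.
  intros k. unfold Gs. replace (0 + 2 * S k)%nat with (2 * S k)%nat by lia. replace (0 + S k)%nat with (S k) by lia. rewrite C_double. rewrite !S_INR. simpl pow. ring.
Qed.

End Rec.

Lemma rec_geo (Y : nat -> R) x Cc K :
  0 < x -> 0 < Cc -> x * Cc * Cc - Cc + 1 = 0 -> 0 <= K -> 4 * x * Cc < 1 ->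
  (forall j, Y (S j) = Y j + x * Y (S (S j))) -> (forall j, Rabs (Y j) <= K * 4 ^ j) ->
  forall j, Y j = Cc ^ j * Y 0%nat.
Proof.
  intros Hx HC HCq HK H4 Hrec Hb.
  set (D := fun j => Y (S j) - Cc * Y j).
  assert (HD : forall j, x * Cc * D (S j) = D j).
  { intros j. unfold D. specialize (Hrec j).
    replace (x * Cc * (Y (S (S j)) - Cc * Y (S j))) with (Cc * (x * Y (S (S j))) - (x * Cc * Cc) * Y (S j)) by ring.
    replace (x * Y (S (S j))) with (Y (S j) - Y j) by lra.
    replace (x * Cc * Cc) with (Cc - 1) by lra. ring. }
  assert (HD0 : forall j, D 0%nat = (x * Cc) ^ j * D j).
  { induction j. simpl; ring. rewrite IHj, <- HD. simpl. ring. }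
  assert (HDb : forall j, Rabs (D j) <= K * (4 + Cc) * 4 ^ j).
  { intros j. unfold D. eapply Rle_trans. apply Rabs_triang. rewrite Rabs_Ropp, Rabs_mult, (Rabs_pos_eq Cc) by lra.
    pose proof (Hb (S j)). pose proof (Hb j). simpl pow in *. nra. }
  assert (Z : D 0%nat = 0).
  { destruct (Req_dec (D 0%nat) 0) as [E|Hne]; auto. exfalso.
    assert (Hpos : 0 < Rabs (D 0%nat)) by (apply Rabs_pos_lt; auto).
    assert (HxC : 0 <= 4 * x * Cc) by nra.
    destruct (pow_lt_1_zero (4 * x * Cc) ltac:(rewrite Rabs_pos_eq; lra) (Rabs (D 0%nat) / (K * (4 + Cc) + 1))) as [N HN].
    { apply Rdiv_lt_0_compat; nra. }
    specialize (HN N ltac:(lia)). rewrite Rabs_pos_eq in HN by (apply pow_le; lra).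
    rewrite (HD0 N) in Hpos, HN. rewrite Rabs_mult, (Rabs_pos_eq ((x * Cc) ^ N)) in Hpos, HN by (apply pow_le; nra).
    pose proof (HDb N).
    assert (E4 : (4 * x * Cc) ^ N = (x * Cc) ^ N * 4 ^ N) by (rewrite <- Rpow_mult_distr; f_equal; ring).
    rewrite E4 in HN.
    assert (0 <= (x * Cc) ^ N) by (apply pow_le; nra).
    assert (A1 : (x * Cc) ^ N * Rabs (D N) <= K * (4 + Cc) * ((x * Cc) ^ N * 4 ^ N)) by nra.
    assert (A2 : K * (4 + Cc) * ((x * Cc) ^ N * 4 ^ N) <= K * (4 + Cc) * ((x * Cc) ^ N * Rabs (D N) / (K * (4 + Cc) + 1))).
    { apply Rmult_le_compat_l. nra. lra. }
    assert (A3 : K * (4 + Cc) * ((x * Cc) ^ N * Rabs (D N) / (K * (4 + Cc) + 1)) < (x * Cc) ^ N * Rabs (D N)).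
    { unfold Rdiv. apply (Rmult_lt_reg_r (K * (4 + Cc) + 1)). nra.
      rewrite !Rmult_assoc, Rinv_l by nra. nra. }
    lra. }
  assert (HDz : forall j, D j = 0).
  { intros j. induction j. exact Z. specialize (HD j). rewrite IHj in HD.
    assert (0 < x * Cc) by nra. nra. }
  intros j. induction j. simpl; ring.
  specialize (HDz j). unfold D in HDz. simpl. rewrite IHj in HDz. lra.
Qed.


Lemma exp_is y : is_series (fun j => y ^ j / INR (fact j)) (exp y).
Proof.
  apply (is_series_ext (fun j => / INR (fact j) * y ^ j)). { intros; simpl; unfold Rdiv; ring. }
  rewrite is_series_Reals. exact (proj2_sig (exist_exp y)).
Qed.

Lemma jexp_is y : is_series (fun j => INR j * (y ^ j / INR (fact j))) (y * exp y).
Proof.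
  apply is_series_decr_1.
  apply (is_series_ext (fun k => y ^ k / INR (fact k) * y)).
  { intros k. rewrite fact_simpl, mult_INR. cbn [pow]. change (y ^ k / INR (fact k) * y = INR (S k) * (y * y ^ k / (INR (S k) * INR (fact k)))). field. split.
    apply INR_fact_neq_0. apply not_0_INR; lia. }
  match goal with |- is_series _ ?l => replace l with (exp y * y) end.
  2:{ simpl. change (exp y * y = y * exp y + - (0 * (1 / 1))). field. }
  exact (is_series_scal_r y _ _ (exp_is y)).
Qed.

Section Core.
Variables s v : R.
Hypothesis Hs : 0 < s.
Hypothesis Hv : 0 < v.
Hypothesis Hsv : s * s = v * v + 1.
Hypothesis Hs24 : 24 <= s * s.

Let z := / (2 * s).
Let x := z * z.
Let Cc := 2 * s * (s - v).
Let a := s / (2 * (v * v) * (s - v)).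

Lemma v_lt_s : v < s.
Proof. nra. Qed.
Lemma s_lt_2v : s < 2 * v.
Proof. nra. Qed.

Lemma x_eq : x = / (4 * (s * s)).
Proof. unfold x, z. field. lra. Qed.

Lemma x_range : 0 <= x <= 1/96.
Proof.
  rewrite x_eq. split. left; apply Rinv_0_lt_compat; nra.
  replace (1/96) with (/ 96) by field. apply Rinv_le_contravar; nra.
Qed.

Lemma Cc_quad : x * Cc * Cc - Cc + 1 = 0.
Proof. rewrite x_eq. unfold Cc. field_simplify. nra. nra. Qed.

Lemma Cc_pos : 0 < Cc.
Proof. unfold Cc. pose proof v_lt_s. nra. Qed.

Lemma Cc_le2 : Cc <= 2.
Proof. unfold Cc. pose proof v_lt_s. nra. Qed.

Lemma xCc : 2 * x * Cc = (s - v) / s.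
Proof. rewrite x_eq. unfold Cc. field. lra. Qed.

Lemma four_xCc : 4 * x * Cc < 1.
Proof.
  replace (4 * x * Cc) with (2 * (2 * x * Cc)) by ring. rewrite xCc.
  pose proof s_lt_2v. apply (Rmult_lt_reg_r s); auto. unfold Rdiv. field_simplify; lra.
Qed.

Lemma F_closed j : F x j = Cc ^ j * (s / v).
Proof.
  pose proof x_range as Hx.
  assert (Hx0 : 0 < x) by (rewrite x_eq; apply Rinv_0_lt_compat; nra).
  pose proof (rec_geo (F x) x Cc 2 Hx0 Cc_pos Cc_quad ltac:(lra) four_xCc (F_rec x Hx) (F_bound x Hx)) as H.
  rewrite H. f_equal.
  pose proof (F_base x Hx) as B. rewrite (H 1%nat) in B. simpl in B.
  assert (E : F x 0 * (1 - 2 * x * Cc) = 1) by (rewrite Rmult_minus_distr_l; lra).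
  rewrite xCc in E. replace (1 - (s - v) / s) with (v / s) in E by (field; lra).
  transitivity (F x 0 * (v / s) * (s / v)). field. split; lra. rewrite E. ring.
Qed.

Lemma a_pos : 0 < a.
Proof. unfold a. pose proof v_lt_s. apply Rdiv_lt_0_compat; auto. apply Rmult_lt_0_compat; nra. Qed.

Lemma a_2C : a * (2 - Cc) = s / v.
Proof.
  pose proof v_lt_s. replace (2 - Cc) with (2 * v * (s - v)) by (unfold Cc; nra).
  unfold a. field. split; lra.
Qed.

Lemma alg1 (x0 C0 a0 sv t P g0 g1 g2 : R) : x0 * C0 * C0 - C0 + 1 = 0 -> a0 * (2 - C0) = sv ->
  g1 = g0 + P * sv + x0 * g2 ->
  g1 - a0 * (t + 1) * (C0 * P) = (g0 - a0 * t * P) + x0 * (g2 - a0 * (t + 1 + 1) * (C0 * (C0 * P))).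
Proof.
  intros Hq Ha Hg. subst g1. rewrite <- Ha.
  assert (Hq' : x0 * C0 * C0 = C0 - 1) by lra.
  replace (x0 * (g2 - a0 * (t + 1 + 1) * (C0 * (C0 * P)))) with (x0 * g2 - a0 * (t + 1 + 1) * P * (x0 * C0 * C0)) by ring.
  rewrite Hq'. ring.
Qed.

Lemma G_closed j : G x j = (a * INR j + s / (2 * (v * v * v))) * Cc ^ j.
Proof.
  pose proof x_range as Hx. pose proof a_pos.
  assert (Hx0 : 0 < x) by (rewrite x_eq; apply Rinv_0_lt_compat; nra).
  set (Y := fun j => G x j - a * INR j * Cc ^ j).
  assert (HY : forall j, Y (S j) = Y j + x * Y (S (S j))).
  { intros i. unfold Y. rewrite !S_INR. simpl pow.
    apply alg1 with (sv := s / v). apply Cc_quad. apply a_2C.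
    rewrite G_rec by auto. rewrite F_closed. ring. }
  assert (HYb : forall j, Rabs (Y j) <= (2 + a) * 4 ^ j).
  { intros i. unfold Y. unfold Rminus. eapply Rle_trans. apply Rabs_triang.
    rewrite Rabs_Ropp. pose proof (G_bound x Hx i).
    assert (H1 : Rabs (a * INR i * Cc ^ i) <= a * 4 ^ i).
    { rewrite Rabs_pos_eq. 2:{ pose proof (pos_INR i). pose proof (pow_le Cc i ltac:(pose proof Cc_pos; lra)). apply Rmult_le_pos; [apply Rmult_le_pos|]; lra. }
      pose proof (INR_le_2pow i). pose proof (pos_INR i).
      assert (Hc : Cc ^ i <= 2 ^ i) by (apply pow_incr; pose proof Cc_pos; pose proof Cc_le2; lra).
      pose proof (pow_le Cc i ltac:(pose proof Cc_pos; lra)).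
      replace 4 with (2 * 2) by ring. rewrite Rpow_mult_distr.
      rewrite Rmult_assoc. apply Rmult_le_compat_l; [lra|]. apply Rmult_le_compat; auto. }
    lra. }
  pose proof (rec_geo Y x Cc (2 + a) Hx0 Cc_pos Cc_quad ltac:(lra) four_xCc HY HYb) as HR.
  assert (E : G x j = a * INR j * Cc ^ j + Y j) by (unfold Y; ring). rewrite E, HR.
  assert (Y0 : Y 0%nat = G x 0) by (unfold Y; simpl; ring). rewrite Y0.
  pose proof (G_base x Hx) as B.
  assert (E1 : G x 1 = a * Cc + Cc * G x 0).
  { replace (G x 1) with (a * INR 1 * Cc ^ 1 + Y 1%nat) by (unfold Y; ring). rewrite HR, Y0. simpl. ring. }
  rewrite E1 in B.
  assert (E2 : G x 0 * (1 - 2 * x * Cc) = 2 * x * Cc * a) by lra.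
  rewrite xCc in E2. replace (1 - (s - v) / s) with (v / s) in E2 by (field; lra).
  assert (E3 : G x 0 = s / (2 * (v * v * v))).
  { transitivity (G x 0 * (v / s) * (s / v)). field. split; lra. rewrite E2. unfold a.
    pose proof v_lt_s. field. repeat split; lra. }
  rewrite E3. ring.
Qed.

Variable c : R.
Hypothesis Hc : 0 < c <= 2/3.

Let beta (j k : nat) : R := (- (c * z)) ^ j / INR (fact j) * Gs x j k.
Let Ea (j i : nat) : R := ilv (beta j) i.

Lemma cz_small : 0 <= 4 * (c * z) <= 9/16.
Proof.
  unfold z. assert (4 < s) by nra.
  split. apply Rmult_le_pos; [lra|]. apply Rmult_le_pos; [lra|]. left; apply Rinv_0_lt_compat; lra.
  replace (4 * (c * / (2 * s))) with (2 * c / s) by (field; lra).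
  apply (Rmult_le_reg_r s); [lra|]. unfold Rdiv. rewrite Rmult_assoc, Rinv_l by lra. nra.
Qed.

Lemma Ea_bound j i : Rabs (Ea j i) <= 1 * (9/16) ^ j * (3/4) ^ i.
Proof.
  pose proof x_range as Hx. pose proof cz_small.
  assert (0 <= (9/16)^j) by (apply pow_le; lra).
  assert (0 <= (3/4)^i) by (apply pow_le; lra).
  unfold Ea, ilv. destruct (Nat.even i) eqn:He.
  2:{ rewrite Rabs_R0. nra. }
  assert (Hi : i = (2 * Nat.div2 i)%nat).
  { pose proof (Nat.div2_odd i) as Ho. rewrite <- Nat.negb_even, He in Ho. simpl in Ho. lia. }
  set (k := Nat.div2 i) in *. rewrite Hi, pow_mult.
  replace ((3/4)^2) with (9/16) by field.
  unfold beta. rewrite Rabs_mult. unfold Rdiv. rewrite Rabs_mult, <- RPow_abs.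
  rewrite Rabs_Ropp, (Rabs_pos_eq (c * z)) by lra.
  rewrite Rabs_pos_eq by (left; apply Rinv_0_lt_compat, INR_fact_lt_0).
  rewrite (Rabs_pos_eq (Gs x j k)) by (apply (Gs_bound x j k); lra).
  destruct (Gs_bound x j k ltac:(lra)) as [G1 G2].
  assert (Hf : / INR (fact j) <= 1).
  { replace 1 with (/ 1) by field. apply Rinv_le_contravar. lra.
    pose proof (lt_O_fact j). apply (le_INR 1). lia. }
  assert (Hf0 : 0 <= / INR (fact j)) by (left; apply Rinv_0_lt_compat, INR_fact_lt_0).
  assert (P1 : 0 <= (c * z) ^ j) by (apply pow_le; lra).
  assert (P2 : (4 * (c * z)) ^ j <= (9/16) ^ j) by (apply pow_incr; lra).
  assert (P3 : (8 * x) ^ k <= (9/16) ^ k) by (apply pow_incr; lra).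
  assert (P4 : 0 <= (8 * x) ^ k) by (apply pow_le; lra).
  rewrite Rpow_mult_distr in P2.
  assert (P5 : (c * z) ^ j * / INR (fact j) <= (c * z) ^ j) by nra.
  assert (P6 : (c * z) ^ j * / INR (fact j) * Gs x j k <= (c * z) ^ j * (4 ^ j * (8 * x) ^ k)).
  { apply Rmult_le_compat; auto. apply Rmult_le_pos; auto. }
  assert (P7 : 0 <= 4 ^ j) by (apply pow_le; lra).
  assert (P8 : (c * z) ^ j * (4 ^ j * (8 * x) ^ k) <= (9/16) ^ j * (9/16) ^ k).
  { replace ((c * z) ^ j * (4 ^ j * (8 * x) ^ k)) with ((4 ^ j * (c * z) ^ j) * (8 * x) ^ k) by ring.
    apply Rmult_le_compat; auto. apply Rmult_le_pos; auto. }
  lra.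
Qed.

Lemma beta_is j : is_series (beta j) ((- (c * z)) ^ j / INR (fact j) * G x j).
Proof.
  pose proof x_range as Hx. unfold beta.
  apply (is_series_ext (fun k => Gs x j k * ((- (c * z)) ^ j / INR (fact j)))). { intros; simpl; ring. }
  replace ((- (c * z)) ^ j / INR (fact j) * G x j) with (G x j * ((- (c * z)) ^ j / INR (fact j))) by ring.
  apply is_series_scal_r. apply Series_correct. apply G_ex; lra.
Qed.

Lemma row_val j : Series (Ea j) = (- (c * z)) ^ j / INR (fact j) * G x j.
Proof. apply is_series_unique. unfold Ea. apply is_series_ilv. apply beta_is. Qed.

Lemma fub : is_series (fun m => sum_f_R0 (fun j => Ea j (m - j)%nat) m) (Series (fun j => Series (Ea j))).
Proof.
  apply (diag_fubini Ea (9/16) (3/4) 1); try lra. intros; apply Ea_bound.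
Qed.

Lemma L_val : Series (fun j => Series (Ea j)) =
  exp (- (c * z) * Cc) * (s / (2 * (v * v * v)) + a * (- (c * z) * Cc)).
Proof.
  apply is_series_unique. set (y := - (c * z) * Cc).
  apply (is_series_ext (fun j => (s / (2 * (v * v * v))) * (y ^ j / INR (fact j)) + a * (INR j * (y ^ j / INR (fact j))))).
  { intros j. rewrite row_val, G_closed. unfold y. rewrite Rpow_mult_distr. simpl. field. split; [lra|apply INR_fact_neq_0]. }
  replace (exp y * (s / (2 * (v * v * v)) + a * y)) with ((s / (2 * (v * v * v))) * exp y + a * (y * exp y)) by ring.
  apply (is_series_plus (V := R_NormedModule)).
  - apply (is_series_ext (fun j => (y ^ j / INR (fact j)) * (s / (2 * (v * v * v))))). { intros; simpl; ring. }
    rewrite (Rmult_comm (s / _)). apply is_series_scal_r. apply exp_is.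
  - apply (is_series_ext (fun j => (INR j * (y ^ j / INR (fact j))) * a)). { intros; simpl; ring. }
    rewrite (Rmult_comm a). apply is_series_scal_r. apply jexp_is.
Qed.

Lemma powRZ_shift t k : (2 * k <= S t)%nat ->
  powerRZ c (Z.of_nat t - 2 * Z.of_nat k)%Z = c ^ (S t - 2 * k) * / c.
Proof.
  intros Hk. replace (Z.of_nat t - 2 * Z.of_nat k)%Z with (Z.of_nat (S t - 2 * k) + (-1))%Z by lia.
  rewrite powerRZ_add by lra. rewrite <- pow_powerRZ. simpl. field. lra.
Qed.

Lemma term_eq t k : (2 * k <= S t)%nat ->
  beta (S t - 2 * k) k =
  Binomial.C (t + 1) k * INR (t + 1 - k) / INR (fact (t + 1 - 2 * k)) *
    powerRZ c (Z.of_nat t - 2 * Z.of_nat k)%Z * (- z) ^ t * (- (c * z)).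
Proof.
  intros Hk. rewrite powRZ_shift by auto. unfold beta, Gs.
  set (j := (S t - 2 * k)%nat).
  replace (j + k)%nat with (t + 1 - k)%nat by (unfold j; lia).
  replace (j + 2 * k)%nat with (t + 1)%nat by (unfold j; lia).
  replace (t + 1 - 2 * k)%nat with j by (unfold j; lia).
  assert (Ht : (- z) ^ t * (- (c * z)) = c * ((- z) ^ j * (z * z) ^ k)).
  { replace ((z * z) ^ k) with ((- z) ^ (2 * k)) by (rewrite pow_mult; f_equal; ring).
    rewrite <- pow_add. replace (j + 2 * k)%nat with (S t) by (unfold j; lia). simpl. ring. }
  rewrite (Rmult_assoc _ ((- z) ^ t)), Ht. replace (- (c * z)) with (c * (- z)) by ring. rewrite Rpow_mult_distr.
  unfold x. field. split. lra. apply INR_fact_neq_0.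
Qed.

Let inner (t : nat) := sum_f_R0 (fun k => Binomial.C (t + 1) k * INR (t + 1 - k) / INR (fact (t + 1 - 2 * k)) *
      powerRZ c (Z.of_nat t - 2 * Z.of_nat k)%Z) ((t + 1) / 2).

Lemma d_eq t : sum_f_R0 (fun j => Ea j (S t - j)%nat) (S t) = - (c * z) * ((- z) ^ t * inner t).
Proof.
  unfold Ea. rewrite <- (reidx beta (S t)). unfold inner.
  replace ((t + 1) / 2)%nat with (Nat.div2 (S t)) by (rewrite Nat.div2_div; f_equal; lia).
  rewrite (scal_sum _ _ ((- z) ^ t)), scal_sum.
  apply sum_eq. intros k Hk. rewrite term_eq. reflexivity.
  pose proof (Nat.div2_odd (S t)). lia.
Qed.

Lemma d0 : sum_f_R0 (fun j => Ea j (0 - j)%nat) 0 = 0.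
Proof. simpl. unfold Ea, ilv, beta, Gs. simpl. ring. Qed.

Lemma core_series : is_series (fun t => (- z) ^ t * inner t)
   (exp (- (c * z) * Cc) * (s / (2 * (v * v * v)) + a * (- (c * z) * Cc)) / (- (c * z))).
Proof.
  pose proof fub as Hf. rewrite L_val in Hf.
  set (L := exp (- (c * z) * Cc) * (s / (2 * (v * v * v)) + a * (- (c * z) * Cc))) in *.
  set (d := fun m => sum_f_R0 (fun j => Ea j (m - j)%nat) m) in *.
  assert (H1 : is_series (fun t => d (S t)) L).
  { apply is_series_incr_1. match goal with |- is_series _ ?l => replace l with L end. exact Hf.
    change (L = L + d 0%nat). unfold d; rewrite d0; ring. }
  assert (Hcz : c * z <> 0).
  { unfold z. apply Rmult_integral_contrapositive. split. lra. apply Rinv_neq_0_compat. lra. }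
  apply (is_series_ext (fun t => d (S t) * / (- (c * z)))).
  { intros t. unfold d. rewrite d_eq. change (- (c * z) * ((- z) ^ t * inner t) * / - (c * z) = (- z) ^ t * inner t). field. split; intro HH; apply Hcz; rewrite HH; ring. }
  unfold Rdiv. apply is_series_scal_r. exact H1.
Qed.

End Core.

Theorem mainTheorem5 (n : nat) (hn : (1 <= n)%nat) :
  ex_series (g_term n) /\
  sqrt 12 * exp (mu n) / (24 * INR n - 1) * (1 - / mu n)
  = exp (PI * sqrt (2 * INR n / 3)) / (4 * INR n * sqrt 3) * Series (g_term n).
Proof.
  assert (Hn : 1 <= INR n) by (apply (le_INR 1); lia).
  set (s := sqrt (24 * INR n)). set (v := sqrt (24 * INR n - 1)). set (c := PI / 6).
  assert (Hss : s * s = 24 * INR n) by (apply sqrt_sqrt; lra).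
  assert (Hvv : v * v = 24 * INR n - 1) by (apply sqrt_sqrt; lra).
  assert (Hs : 0 < s) by (apply sqrt_lt_R0; lra).
  assert (Hv : 0 < v) by (apply sqrt_lt_R0; lra).
  assert (Hc : 0 < c <= 2 / 3) by (unfold c; pose proof PI_RGT_0; pose proof PI_4; split; lra).
  assert (Hsv : s * s = v * v + 1) by lra.
  assert (Hs24 : 24 <= s * s) by lra.
  pose proof (core_series s v Hs Hv Hsv Hs24 c Hc) as H.
  set (V := exp (- (c * / (2 * s)) * (2 * s * (s - v))) *
          (s / (2 * (v * v * v)) + s / (2 * (v * v) * (s - v)) * (- (c * / (2 * s)) * (2 * s * (s - v)))) /
          - (c * / (2 * s))) in H.
  assert (Hmul : (- (4 * sqrt 6)) * sqrt (INR n) = - (2 * s)).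
  { unfold s. replace (24 * INR n) with ((2 * 2) * (6 * INR n)) by ring.
    rewrite (sqrt_mult (2 * 2) (6 * INR n)) by lra. rewrite (sqrt_mult 6 (INR n)) by lra. rewrite sqrt_square by lra. ring. }
  assert (Hsn : 0 < sqrt (INR n)) by (apply sqrt_lt_R0; lra).
  assert (Hg : forall t, g_term n t = (- / (2 * s)) ^ t *
          sum_f_R0 (fun k => Binomial.C (t + 1) k * INR (t + 1 - k) / INR (fact (t + 1 - 2 * k)) *
             powerRZ c (Z.of_nat t - 2 * Z.of_nat k)) ((t + 1) / 2)).
  { intros t. unfold g_term, g. unfold c. 
    replace (- / (2 * s)) with (/ ((- (4 * sqrt 6)) * sqrt (INR n))) by (rewrite Hmul; field; lra).
    rewrite pow_inv, Rpow_mult_distr. field. split; apply pow_nonzero. lra.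
    assert (0 < sqrt 6) by (apply sqrt_lt_R0; lra). lra. }
  assert (HS : is_series (g_term n) V).
  { apply (is_series_ext _ _ V (fun t => eq_sym (Hg t))). exact H. }
  split. eexists; exact HS.
  rewrite (is_series_unique _ _ HS).
  change (mu n) with (c * v).
  assert (Hpi : PI * sqrt (2 * INR n / 3) = c * s).
  { unfold s, c. replace (24 * INR n) with ((6 * 6) * (2 * INR n / 3)) by field.
    rewrite sqrt_mult by lra. rewrite sqrt_square by lra. field. }
  rewrite Hpi.
  assert (Hsv' : v < s) by nra.
  unfold V.
  replace (- (c * / (2 * s)) * (2 * s * (s - v))) with (c * v + - (c * s)) by (field; lra).
  replace (exp (c * v)) with (exp (c * s) * exp (c * v + - (c * s))).
  2:{ rewrite <- exp_plus. f_equal. ring. }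
  set (E1 := exp (c * s)). set (E2 := exp (c * v + - (c * s))).
  set (r3 := sqrt 3).
  assert (Hr3 : r3 * r3 = 3) by (apply sqrt_sqrt; lra).
  assert (Hr3p : 0 < r3) by (apply sqrt_lt_R0; lra).
  assert (H12 : sqrt 12 = 6 / r3).
  { replace 12 with ((2 * 2) * 3) by ring. rewrite sqrt_mult by lra. rewrite sqrt_square by lra.
    fold r3. replace 6 with (2 * (r3 * r3)) by lra. field. lra. }
  rewrite H12.
  replace (24 * INR n - 1) with (v * v) by lra.
  replace (4 * INR n) with (s * s / 6) by lra.
  field. repeat split; lra.
Qed.
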